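(* Under the standing assumptions, suppose $a>1/4$ and $m\ge 6$, and let $\theta_a=\cos^{-1}\!\left(-\frac{1}{2\sqrt a}\right)$. For an integer $h$ with $\lfloor (m+1)/2\rfloor+1\le h\le m+1$ let $$J_h=\begin{cases}\left(\frac{h-1}{m+1}\pi,\frac{h}{m+1}\pi\right) & \text{if } \lfloor (m+1)/2\rfloor+2\le h\le m+1,\\[2pt] \left(\frac{\pi}{2},\frac{h}{m+1}\pi\right) & \text{if } h=\lfloor (m+1)/2\rfloor+1.\end{cases}$$ If $\theta_a\in J_h$, then $g_m$ has at least two zeros in $J_h\setminus\{\theta_a\}$ when $\lfloor (m+1)/2\rfloor+2\le h\le m$, and at least one zero in $J_h\setminus\{\theta_a\}$ when $h=m+1$ or $h=\lfloor(m+1)/2\rfloor+1$.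
   Context: Standing assumptions: $a,b\in\mathbb{R}$ with $b>0$, $1+a+b>0$, $9-27a+b>0$, $2-8a+8a^2+ab\ne0$, $b+1-a\ne0$. Let $f^*(\zeta,\theta)=(\zeta+2\cos\theta)(2\zeta\cos\theta+1)+b\zeta-a(\zeta+2\cos\theta)^3$. Under these assumptions, for each $\theta\in(\pi/2,\pi)$ the polynomial $f^*(\cdot,\theta)$ has exactly one real zero in $(-1,1)$; denote it $w(\theta)$ and set $\zeta(\theta)=1/w(\theta)$ (finite except at $\theta_a$). For $\theta\in(\pi/2,\pi)$ with $w(\theta)\ne0$ define $$g_m(\theta)=\frac{(\zeta(\theta)-\cos\theta)\sin((m+1)\theta)}{\sin\theta}-\cos((m+1)\theta)+\frac{1}{\zeta(\theta)^{m+1}}.$$ *)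

(* Defs.v *)
From Stdlib Require Import Reals Lra Lia.
Open Scope R_scope.

Definition standing (a b : R) : Prop :=
  b > 0 /\ 1 + a + b > 0 /\ 9 - 27 * a + b > 0 /\
  2 - 8 * a + 8 * a ^ 2 + a * b <> 0 /\ b + 1 - a <> 0.

Definition fstar (a b zeta theta : R) : R :=
  (zeta + 2 * cos theta) * (2 * zeta * cos theta + 1) + b * zeta
  - a * (zeta + 2 * cos theta) ^ 3.

Definition is_w (a b : R) (w : R -> R) : Prop :=
  forall theta, PI / 2 < theta < PI ->
    -1 < w theta < 1 /\ fstar a b (w theta) theta = 0.

(* g_m(theta), with zeta = 1/w, so 1/zeta^(m+1) = w^(m+1). *)
Definition g (w : R -> R) (m : nat) (theta : R) : R :=
  (/ w theta - cos theta) * sin (INR (m + 1) * theta) / sin theta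
  - cos (INR (m + 1) * theta) + (w theta) ^ (m + 1).

Definition theta_a (a : R) : R := acos (- (1 / (2 * sqrt a))).

Definition fl (m : nat) : nat := Nat.div (m + 1) 2.

Definition Jlo (m h : nat) : R :=
  if Nat.eqb h (fl m + 1) then PI / 2
  else INR (h - 1) / INR (m + 1) * PI.
Definition Jhi (m h : nat) : R := INR h / INR (m + 1) * PI.

Definition inJ (m h : nat) (theta : R) : Prop := Jlo m h < theta < Jhi m h.

(* theta is a zero of g_m in J_h \ {theta_a} (g_m defined: w theta <> 0) *)
Definition zero_in (a : R) (w : R -> R) (m h : nat) (theta : R) : Prop :=
  inJ m h theta /\ theta <> theta_a a /\ w theta <> 0 /\ g w m theta = 0.

(* Main.v *)
From Stdlib Require Import Reals Lra Lia Psatz.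
Require Import Defs.
Open Scope R_scope.

Definition P (a b z c : R) : R :=
  (z + 2 * c) * (2 * z * c + 1) + b * z - a * (z + 2 * c) ^ 3.

Lemma P_1 a b c : standing a b -> a > 1/4 -> -1 < c < 0 -> P a b 1 c > 0.
Proof.
  intros [Hb [H1 [H9 _]]] Ha Hc.
  assert (E : P a b 1 c = (1+2*c)^2 + b - a * (1+2*c)^3) by (unfold P; ring).
  rewrite E. set (u := 1 + 2*c).
  assert (Hu : -1 < u < 1) by (unfold u; lra). clearbody u.
  destruct (Rle_dec u 0).
  - assert (u^3 <= 0) by (replace (u^3) with (u*(u*u)) by ring; assert (u*u>=0) by nra; nra). nra.
  - destruct (Rle_dec a 1).
    + assert (1 - a*u > 0) by nra. assert (u^2*(1 - a*u) >= 0) by (apply Rle_ge, Rmult_le_pos; [apply pow2_ge_0|lra]). nra.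
    + assert (a*(1-u^3) - (1-u^2) >= 0).
      { replace (a*(1-u^3) - (1-u^2)) with ((1-u)*(a*(1+u+u^2) - (1+u))) by ring.
        apply Rle_ge, Rmult_le_pos; nra. }
      nra.
Qed.

Lemma P_m1 a b c : standing a b -> a > 1/4 -> -1 < c < 0 -> P a b (-1) c < 0.
Proof.
  intros [Hb [H1 [H9 _]]] Ha Hc.
  assert (E : P a b (-1) c = a*(1-2*c)^3 - (1-2*c)^2 - b) by (unfold P; ring).
  rewrite E. set (t := 1 - 2*c).
  assert (Ht : 1 < t < 3) by (unfold t; lra). clearbody t.
  destruct (Rle_dec (a*t) 1).
  - assert (t^2*(a*t-1) <= 0) by nra. nra.
  - assert (a*(t^2+3*t+9) > t + 3).
    { assert (a*(t^2+3*t+9)*t > (t+3)*t) by nra. nra. }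
    assert (a*t^3 - t^2 - (27*a-9) < 0).
    { replace (a*t^3 - t^2 - (27*a-9)) with ((t-3)*(a*(t^2+3*t+9) - (t+3))) by ring.
      nra. }
    lra.
Qed.

Lemma P_uniq a b c z1 z2 : standing a b -> a > 1/4 -> -1 < c < 0 ->
  -1 < z1 < 1 -> -1 < z2 < 1 -> P a b z1 c = 0 -> P a b z2 c = 0 -> z1 = z2.
Proof.
  intros Hs Ha Hc H1 H2 E1 E2.
  destruct (Req_dec z1 z2) as [|Hne]; auto. exfalso.
  set (k := (2*c - 6*a*c) - a*(z1+z2)).
  set (R := fun z => P a b z c - (z-z1)*(z-z2)*(-a*z+k)).
  assert (HR : forall z, R z * (z2 - z1) = R z1 * (z2 - z) + R z2 * (z - z1)).
  { intro z. unfold R, k, P. ring. }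
  assert (R0 : forall z, R z = 0).
  { intro z. specialize (HR z). unfold R in HR at 2 3. rewrite E1, E2 in HR.
    assert (R z * (z2 - z1) = 0) by lra.
    apply Rmult_integral in H. destruct H; auto. lra. }
  pose proof (P_m1 a b c Hs Ha Hc). pose proof (P_1 a b c Hs Ha Hc).
  pose proof (R0 (-1)) as A. pose proof (R0 1) as B. unfold R in A, B.
  assert (a + k < 0).
  { assert ((1+z1)*(1+z2) > 0) by nra. nra. }
  assert (k - a > 0).
  { assert ((1-z1)*(1-z2) > 0) by nra. nra. }
  lra.
Qed.

Lemma P_cont_z a b c : continuity (fun z => P a b z c).
Proof. unfold P. reg. Qed.

Lemma P_cont_t a b z t : continuity_pt (fun t => P a b z (cos t)) t.
Proof. unfold P. reg. Qed.

Lemma cont_neg F x0 : continuity_pt F x0 -> F x0 < 0 ->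
  exists d, d > 0 /\ forall x, Rabs (x - x0) < d -> F x < 0.
Proof.
  intros Hc Hn.
  unfold continuity_pt, continue_in, limit1_in, limit_in in Hc.
  destruct (Hc (- F x0)) as [al [Hal H]]; [lra|].
  exists al. split; auto. intros x Hx.
  destruct (Req_dec x x0) as [->|Hne]; auto.
  assert (Hd := H x). simpl in Hd. unfold R_dist in Hd.
  assert (Rabs (F x - F x0) < - F x0) by (apply Hd; split; [split; [exact I| auto] | exact Hx]).
  apply Rabs_def2 in H0. lra.
Qed.

Lemma cont_pos F x0 : continuity_pt F x0 -> F x0 > 0 ->
  exists d, d > 0 /\ forall x, Rabs (x - x0) < d -> F x > 0.
Proof.
  intros Hc Hp.
  destruct (cont_neg (fun x => - F x) x0) as [d [Hd H]].
  - apply continuity_pt_opp; auto.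
  - lra.
  - exists d. split; auto. intros x Hx. specialize (H x Hx). lra.
Qed.

Lemma cos_D t : PI/2 < t < PI -> -1 < cos t < 0.
Proof.
  intros Ht. split.
  - rewrite <- cos_PI. apply cos_decreasing_1; lra.
  - apply cos_lt_0; lra.
Qed.

Definition Hyp a b w := standing a b /\ is_w a b w /\ a > 1/4.

Lemma w_spec a b w t : Hyp a b w -> PI/2 < t < PI ->
  -1 < w t < 1 /\ P a b (w t) (cos t) = 0.
Proof. intros [_ [Hw _]] Ht. apply (Hw t Ht). Qed.

Lemma w_uniq a b w t z : Hyp a b w -> PI/2 < t < PI -> -1 < z < 1 ->
  P a b z (cos t) = 0 -> z = w t.
Proof.
  intros H Ht Hz Ez. destruct (w_spec a b w t H Ht) as [Hw Ew].
  destruct H as [Hs [_ Ha]].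
  exact (P_uniq a b (cos t) z (w t) Hs Ha (cos_D t Ht) Hz Hw Ez Ew).
Qed.

Lemma sign_left a b w t p : Hyp a b w -> PI/2 < t < PI -> -1 < p < w t ->
  P a b p (cos t) < 0.
Proof.
  intros H Ht Hp. destruct (w_spec a b w t H Ht) as [Hw Ew].
  destruct (Rlt_le_dec (P a b p (cos t)) 0) as [|Hge]; auto. exfalso.
  destruct H as [Hs [Hiw Ha]] eqn:HH.
  pose proof (P_m1 a b (cos t) Hs Ha (cos_D t Ht)).
  destruct Hge as [Hgt|Heq].
  - destruct (IVT (fun z => P a b z (cos t)) (-1) p (P_cont_z _ _ _)) as [z [Hz Ez]];
      try lra.
    simpl in Ez.
    assert (z <> -1) by (intro; subst; lra).
    assert (z = w t) by (apply (w_uniq a b w t z H Ht); auto; lra). lra.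
  - assert (p = w t) by (apply (w_uniq a b w t p H Ht); auto; lra). lra.
Qed.

Lemma sign_right a b w t q : Hyp a b w -> PI/2 < t < PI -> w t < q < 1 ->
  P a b q (cos t) > 0.
Proof.
  intros H Ht Hq. destruct (w_spec a b w t H Ht) as [Hw Ew].
  destruct (Rle_lt_dec (P a b q (cos t)) 0) as [Hle|]; auto. exfalso.
  destruct H as [Hs [Hiw Ha]] eqn:HH.
  pose proof (P_1 a b (cos t) Hs Ha (cos_D t Ht)).
  destruct Hle as [Hlt|Heq].
  - destruct (IVT (fun z => P a b z (cos t)) q 1 (P_cont_z _ _ _)) as [z [Hz Ez]];
      try lra.
    simpl in Ez.
    assert (z <> 1) by (intro; subst; lra).
    assert (z = w t) by (apply (w_uniq a b w t z H Ht); auto; lra). lra.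
  - assert (q = w t) by (apply (w_uniq a b w t q H Ht); auto; lra). lra.
Qed.

Lemma w_cont a b w t0 : Hyp a b w -> PI/2 < t0 < PI -> continuity_pt w t0.
Proof.
  intros H Ht0.
  destruct (w_spec a b w t0 H Ht0) as [Hw0 _].
  unfold continuity_pt, continue_in, limit1_in, limit_in.
  intros eps Heps. simpl. unfold R_dist.
  set (e := Rmin (eps/2) (Rmin ((1 - w t0)/2) ((w t0 + 1)/2))).
  assert (He1 : e <= eps/2) by apply Rmin_l.
  assert (He2 : e <= (1 - w t0)/2) by (eapply Rle_trans; [apply Rmin_r| apply Rmin_l]).
  assert (He3 : e <= (w t0 + 1)/2) by (eapply Rle_trans; [apply Rmin_r| apply Rmin_r]).
  assert (He0 : e > 0).
  { unfold e. apply Rmin_pos; [lra| apply Rmin_pos; lra]. }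
  clearbody e.
  destruct (cont_neg (fun t => P a b (w t0 - e) (cos t)) t0 (P_cont_t _ _ _ _))
    as [d1 [Hd1 H1]].
  { simpl. apply (sign_left a b w); auto; lra. }
  destruct (cont_pos (fun t => P a b (w t0 + e) (cos t)) t0 (P_cont_t _ _ _ _))
    as [d2 [Hd2 H2]].
  { simpl. apply (sign_right a b w); auto; lra. }
  set (d3 := Rmin (t0 - PI/2) (PI - t0)).
  assert (Hd3 : d3 > 0) by (unfold d3; apply Rmin_pos; lra).
  exists (Rmin d1 (Rmin d2 d3)). split.
  { apply Rmin_pos; [lra | apply Rmin_pos; lra]. }
  intros x [_ Hx].
  assert (Hx1 : Rabs (x - t0) < d1) by (eapply Rlt_le_trans; [exact Hx| apply Rmin_l]).
  assert (Hx2 : Rabs (x - t0) < d2)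
    by (eapply Rlt_le_trans; [exact Hx| eapply Rle_trans; [apply Rmin_r| apply Rmin_l]]).
  assert (Hx3 : Rabs (x - t0) < d3)
    by (eapply Rlt_le_trans; [exact Hx| eapply Rle_trans; [apply Rmin_r| apply Rmin_r]]).
  assert (HxD : PI/2 < x < PI).
  { apply Rabs_def2 in Hx3. unfold d3 in Hx3.
    pose proof (Rmin_l (t0 - PI/2) (PI - t0)). pose proof (Rmin_r (t0 - PI/2) (PI - t0)).
    lra. }
  specialize (H1 x Hx1). specialize (H2 x Hx2). simpl in H1, H2.
  destruct (IVT (fun z => P a b z (cos x)) (w t0 - e) (w t0 + e) (P_cont_z _ _ _))
    as [z [Hz Ez]]; try lra.
  simpl in Ez.
  assert (z = w x) by (apply (w_uniq a b w x z H HxD); auto; lra).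
  subst z. apply Rabs_def1; lra.
Qed.

Lemma sqrt_gt_half a : a > 1/4 -> sqrt a > 1/2.
Proof.
  intros Ha. pose proof (sqrt_pos a). pose proof (sqrt_sqrt a).
  assert (sqrt a * sqrt a = a) by (apply H0; lra). nra.
Qed.

Lemma cos_ta a : a > 1/4 -> cos (theta_a a) = - (1 / (2 * sqrt a)) /\
   -1 < - (1 / (2 * sqrt a)) < 0.
Proof.
  intros Ha. pose proof (sqrt_gt_half a Ha).
  assert (-1 < - (1 / (2 * sqrt a)) < 0).
  { split.
    - assert (1 / (2 * sqrt a) < 1).
      { apply (Rmult_lt_reg_r (2 * sqrt a)); [lra|].
        unfold Rdiv. rewrite Rmult_assoc, Rinv_l; lra. }
      lra.
    - assert (1 / (2 * sqrt a) > 0) by (apply Rdiv_lt_0_compat; lra). lra. }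
  split; auto. unfold theta_a. apply cos_acos. lra.
Qed.

Lemma ta_range a : a > 1/4 -> 0 <= theta_a a <= PI.
Proof. intros. unfold theta_a. apply acos_bound. Qed.

Lemma csq a : a > 1/4 -> 4 * a * (- (1 / (2 * sqrt a)))^2 = 1.
Proof.
  intros Ha. pose proof (sqrt_gt_half a Ha).
  assert (sqrt a * sqrt a = a) by (apply sqrt_sqrt; lra).
  field_simplify; [|lra]. rewrite <- H0 at 1. field. lra.
Qed.

Lemma w_zero_ta a b w t : Hyp a b w -> PI/2 < t < PI -> w t = 0 -> t = theta_a a.
Proof.
  intros H Ht Hw0. destruct (w_spec a b w t H Ht) as [_ E].
  rewrite Hw0 in E. unfold P in E.
  pose proof (cos_D t Ht) as Hc.
  destruct H as [_ [_ Ha]].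
  destruct (cos_ta a Ha) as [Eca Hca].
  pose proof (csq a Ha).
  assert (Hc2 : 4 * a * (cos t)^2 = 1).
  { assert (cos t * (2 - 8 * a * (cos t)^2) = 0) by (rewrite <- E; ring).
    apply Rmult_integral in H0. destruct H0; lra. }
  set (k := - (1 / (2 * sqrt a))) in *.
  assert (Ha0 : a > 0) by lra.
  assert ((cos t - k) * (cos t + k) = 0) by nra.
  apply Rmult_integral in H0. destruct H0 as [H0|H0]; [|lra].
  assert (cos t = cos (theta_a a)) by lra.
  rewrite <- (acos_cos t) by lra. rewrite H1. apply acos_cos. apply ta_range; auto.
Qed.

Lemma w_ta a b w : Hyp a b w -> PI/2 < theta_a a < PI -> w (theta_a a) = 0.
Proof.
  intros H Ht. symmetry. apply (w_uniq a b w); auto; try lra.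
  destruct H as [_ [_ Ha]]. destruct (cos_ta a Ha) as [-> _].
  pose proof (csq a Ha). unfold P.
  set (k := - (1 / (2 * sqrt a))) in *.
  replace ((0 + 2 * k) * (2 * 0 * k + 1) + b * 0 - a * (0 + 2 * k) ^ 3)
    with (2 * k * (1 - 4 * a * k^2)) by ring. rewrite H. ring.
Qed.

Lemma cp_plus f g x : continuity_pt f x -> continuity_pt g x -> continuity_pt (fun t => f t + g t) x.
Proof. apply continuity_pt_plus. Qed.
Lemma cp_minus f g x : continuity_pt f x -> continuity_pt g x -> continuity_pt (fun t => f t - g t) x.
Proof. apply continuity_pt_minus. Qed.
Lemma cp_mult f g x : continuity_pt f x -> continuity_pt g x -> continuity_pt (fun t => f t * g t) x.
Proof. apply continuity_pt_mult. Qed.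
Lemma cp_opp f x : continuity_pt f x -> continuity_pt (fun t => - f t) x.
Proof. apply continuity_pt_opp. Qed.
Lemma cp_div f g x : continuity_pt f x -> continuity_pt g x -> g x <> 0 -> continuity_pt (fun t => f t / g t) x.
Proof. apply continuity_pt_div. Qed.
Lemma cp_inv f x : continuity_pt f x -> f x <> 0 -> continuity_pt (fun t => / f t) x.
Proof. apply continuity_pt_inv. Qed.
Lemma cp_const c x : continuity_pt (fun _ => c) x.
Proof. apply continuity_pt_const. intros u v. reflexivity. Qed.
Lemma cp_id x : continuity_pt (fun t => t) x.
Proof. apply derivable_continuous_pt, derivable_pt_id. Qed.
Lemma cp_pow f n x : continuity_pt f x -> continuity_pt (fun t => f t ^ n) x.
Proof.
  intros H. apply (continuity_pt_comp f (fun y => y ^ n)); auto.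
  apply derivable_continuous_pt, derivable_pt_pow.
Qed.
Lemma cp_cos f x : continuity_pt f x -> continuity_pt (fun t => cos (f t)) x.
Proof. intros H. apply (continuity_pt_comp f cos); auto. apply continuity_cos. Qed.
Lemma cp_sin f x : continuity_pt f x -> continuity_pt (fun t => sin (f t)) x.
Proof. intros H. apply (continuity_pt_comp f sin); auto. apply continuity_sin. Qed.

Ltac cpt := repeat first
  [ apply cp_plus | apply cp_minus | apply cp_mult | apply cp_opp
  | apply cp_pow | apply cp_cos | apply cp_sin | apply cp_const | apply cp_id
  | assumption ].

Definition K a b z c := -a*z^2 + (2*c - 6*a*c)*z + (1 + 4*c^2 + b - 12*a*c^2).

Lemma P_exp a b z c : P a b z c = (2*c - 8*a*c^3) + z * K a b z c.
Proof. unfold P, K. ring. Qed.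

Lemma K_ta_pos a b : standing a b -> a > 1/4 -> K a b 0 (cos (theta_a a)) > 0.
Proof.
  intros Hs Ha. destruct Hs as [Hb [_ [H9 _]]].
  destruct (cos_ta a Ha) as [-> _]. pose proof (csq a Ha).
  set (k := - (1 / (2 * sqrt a))) in *. unfold K.
  assert (Hk : k^2 = 1/(4*a)).
  { apply (Rmult_eq_reg_l (4*a)); [| lra]. rewrite H. field. lra. }
  replace (- a * 0 ^ 2 + (2 * k - 6 * a * k) * 0 + (1 + 4 * k ^ 2 + b - 12 * a * k ^ 2))
    with (1 + 4 * k^2 + b - 3 * (4 * a * k^2)) by ring.
  rewrite H, Hk.
  destruct (Rle_dec a (1/3)).
  - assert (4 * (1 / (4 * a)) >= 3).
    { replace (4 * (1 / (4 * a))) with (1/a) by (field; lra).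
      apply Rle_ge. apply (Rmult_le_reg_r a); [lra|]. unfold Rdiv. rewrite Rmult_assoc, Rinv_l; lra. }
    lra.
  - replace (4 * (1 / (4 * a))) with (1/a) by (field; lra).
    assert (a * (27 * a - 11) + 1 > 0) by nra.
    assert (1/a > 11 - 27*a).
    { apply (Rmult_lt_reg_r a); [lra|]. unfold Rdiv. rewrite Rmult_assoc, Rinv_l; lra. }
    lra.
Qed.

Lemma w_sign_near a b w : Hyp a b w -> PI/2 < theta_a a < PI ->
  exists d, d > 0 /\ forall t, Rabs (t - theta_a a) < d ->
    PI/2 < t < PI /\ (t < theta_a a -> w t > 0) /\ (t > theta_a a -> w t < 0).
Proof.
  intros H Hta. pose proof H as [Hs [Hiw Ha]].
  pose proof (w_cont a b w (theta_a a) H Hta) as Hwc.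
  assert (HF : continuity_pt (fun t => K a b (w t) (cos t)) (theta_a a)).
  { unfold K. cpt. }
  destruct (cont_pos _ _ HF) as [d1 [Hd1 H1]].
  { simpl. rewrite (w_ta a b w H Hta). apply K_ta_pos; auto. }
  set (d3 := Rmin (theta_a a - PI/2) (PI - theta_a a)).
  assert (Hd3 : d3 > 0) by (unfold d3; apply Rmin_pos; lra).
  exists (Rmin d1 d3). split; [apply Rmin_pos; lra|].
  intros t Ht.
  assert (Ht1 : Rabs (t - theta_a a) < d1) by (eapply Rlt_le_trans; [exact Ht| apply Rmin_l]).
  assert (Ht3 : Rabs (t - theta_a a) < d3) by (eapply Rlt_le_trans; [exact Ht| apply Rmin_r]).
  assert (HtD : PI/2 < t < PI).
  { apply Rabs_def2 in Ht3. unfold d3 in Ht3.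
    pose proof (Rmin_l (theta_a a - PI/2) (PI - theta_a a)).
    pose proof (Rmin_r (theta_a a - PI/2) (PI - theta_a a)). lra. }
  specialize (H1 t Ht1). simpl in H1.
  destruct (w_spec a b w t H HtD) as [_ E]. rewrite P_exp in E.
  destruct (cos_ta a Ha) as [Eca Hca]. pose proof (csq a Ha).
  pose proof (cos_D t HtD) as Hc.
  set (k := - (1 / (2 * sqrt a))) in *.
  set (F := K a b (w t) (cos t)) in *.
  set (c := cos t) in *.
  split; auto. split.
  - intros Hlt. assert (c > k).
    { rewrite <- Eca. unfold c. apply cos_decreasing_1; lra. }
    assert (4 * a * c^2 < 1) by nra.
    assert (2 * c - 8 * a * c ^ 3 < 0).
    { replace (2 * c - 8 * a * c ^ 3) with (2 * c * (1 - 4 * a * c^2)) by ring. nra. }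
    nra.
  - intros Hgt. assert (c < k).
    { rewrite <- Eca. unfold c. apply cos_decreasing_1; lra. }
    assert (4 * a * c^2 > 1) by nra.
    assert (2 * c - 8 * a * c ^ 3 > 0).
    { replace (2 * c - 8 * a * c ^ 3) with (2 * c * (1 - 4 * a * c^2)) by ring. nra. }
    nra.
Qed.

Lemma cosnPI n : cos (INR n * PI) = (-1)^n.
Proof.
  induction n. { simpl. rewrite Rmult_0_l. apply cos_0. }
  rewrite S_INR. replace ((INR n + 1) * PI) with (INR n * PI + PI) by ring.
  rewrite neg_cos, IHn. simpl. ring.
Qed.

Lemma sinnPI n : sin (INR n * PI) = 0.
Proof.
  induction n. { simpl. rewrite Rmult_0_l. apply sin_0. }
  rewrite S_INR. replace ((INR n + 1) * PI) with (INR n * PI + PI) by ring.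
  rewrite neg_sin, IHn. ring.
Qed.

Lemma sin_sign h y : (1 <= h)%nat -> INR (h-1) * PI < y < INR h * PI ->
  sin y * (-1)^h < 0.
Proof.
  intros Hh Hy.
  assert (Eh : INR h = INR (h-1) + 1).
  { rewrite <- S_INR. f_equal. lia. }
  set (z := y - INR (h-1) * PI).
  assert (Hz : 0 < z < PI) by (unfold z; rewrite Eh in Hy; lra).
  replace y with (INR (h-1) * PI + z) by (unfold z; ring).
  rewrite sin_plus, sinnPI, cosnPI.
  assert (Eh2 : (-1)^h = -1 * (-1)^(h-1)).
  { destruct h; [lia|]. simpl. replace (h-0)%nat with h by lia. ring. }
  rewrite Eh2.
  pose proof (sin_gt_0 z (proj1 Hz) (proj2 Hz)).
  assert ((-1)^(h-1) * (-1)^(h-1) = 1).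
  { rewrite <- pow_add. replace (h-1+(h-1))%nat with (2*(h-1))%nat by lia.
    rewrite pow_mult. simpl. replace (-1 * (-1 * 1)) with 1 by ring. apply pow1. }
  match goal with |- ?e < 0 => replace e with (- (sin z * ((-1)^(h-1) * (-1)^(h-1)))) by ring end.
  rewrite H0. lra.
Qed.

Lemma s_sq h : (-1)^h * (-1)^h = 1.
Proof.
  rewrite <- pow_add. replace (h+h)%nat with (2*h)%nat by lia.
  rewrite pow_mult. replace ((-1)^2) with 1 by ring. apply pow1.
Qed.

Lemma small_pow s x n : Rabs s = 1 -> -1 < x < 1 -> Rabs (s * x ^ (S n)) < 1.
Proof.
  intros Hs Hx. rewrite Rabs_mult, Hs, Rmult_1_l, <- RPow_abs.
  apply pow_lt_1_compat; [split; [apply Rabs_pos| apply Rabs_def1; lra] | lia].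
Qed.

Lemma g_end w m t k : t = INR k / INR (m+1) * PI ->
  g w m t = - (-1)^k + w t ^ (m+1).
Proof.
  intros ->. unfold g.
  assert (INR (m+1) <> 0) by (apply not_0_INR; lia).
  replace (INR (m + 1) * (INR k / INR (m + 1) * PI)) with (INR k * PI) by (field; auto).
  rewrite sinnPI, cosnPI. unfold Rdiv. ring.
Qed.

Definition psi (w : R -> R) (m : nat) t :=
  (1 - cos t * w t) * sin (INR (m+1) * t) / sin t
  + w t * (- cos (INR (m+1) * t) + w t ^ (m+1)).

Lemma g_psi w m t : w t <> 0 -> sin t <> 0 -> g w m t = psi w m t / w t.
Proof. intros. unfold g, psi. field. auto. Qed.

Ltac cpt2 := repeat first
  [ apply cp_div | apply cp_inv | apply cp_plus | apply cp_minus | apply cp_mult | apply cp_opp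
  | apply cp_pow | apply cp_cos | apply cp_sin | apply cp_const | apply cp_id
  | assumption ].

Lemma sin_D t : PI/2 < t < PI -> sin t > 0.
Proof. intros. apply sin_gt_0; lra. Qed.

Lemma g_cont a b w m x : Hyp a b w -> PI/2 < x < PI -> w x <> 0 ->
  continuity_pt (g w m) x.
Proof.
  intros H Hx Hw. pose proof (w_cont a b w x H Hx). pose proof (sin_D x Hx).
  unfold g. cpt2; lra.
Qed.

Lemma psi_cont a b w m x : Hyp a b w -> PI/2 < x < PI ->
  continuity_pt (psi w m) x.
Proof.
  intros H Hx. pose proof (w_cont a b w x H Hx). pose proof (sin_D x Hx).
  unfold psi. cpt2; lra.
Qed.

Lemma psi_ta a b w m : Hyp a b w -> PI/2 < theta_a a < PI ->
  psi w m (theta_a a) = sin (INR (m+1) * theta_a a) / sin (theta_a a).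
Proof.
  intros H Ht. unfold psi. rewrite (w_ta a b w H Ht).
  pose proof (sin_D _ Ht). rewrite pow_ne_zero by lia. field. lra.
Qed.

Lemma near_ta a b w m h : Hyp a b w -> (1 <= h)%nat -> PI/2 < theta_a a < PI ->
  INR (h-1) * PI < INR (m+1) * theta_a a < INR h * PI ->
  exists d, d > 0 /\ forall t, Rabs (t - theta_a a) < d ->
    PI/2 < t < PI /\ (t < theta_a a -> w t > 0) /\ (t > theta_a a -> w t < 0)
    /\ (-1)^h * psi w m t < 0.
Proof.
  intros H Hh Hta Hy.
  destruct (w_sign_near a b w H Hta) as [d1 [Hd1 H1]].
  assert (Hc : continuity_pt (fun t => (-1)^h * psi w m t) (theta_a a)).
  { apply cp_mult; [apply cp_const| apply (psi_cont a b); auto]. }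
  destruct (cont_neg _ _ Hc) as [d2 [Hd2 H2]].
  { simpl. rewrite (psi_ta a b w m H Hta). pose proof (sin_D _ Hta).
    pose proof (sin_sign h _ Hh Hy).
    replace ((-1) ^ h * (sin (INR (m + 1) * theta_a a) / sin (theta_a a)))
      with ((sin (INR (m + 1) * theta_a a) * (-1)^h) * / sin (theta_a a)) by (field; lra).
    apply Rmult_neg_pos; auto. apply Rinv_0_lt_compat; lra. }
  exists (Rmin d1 d2). split; [apply Rmin_pos; lra|].
  intros t Ht.
  assert (Ht1 : Rabs (t - theta_a a) < d1) by (eapply Rlt_le_trans; [exact Ht| apply Rmin_l]).
  assert (Ht2 : Rabs (t - theta_a a) < d2) by (eapply Rlt_le_trans; [exact Ht| apply Rmin_r]).
  destruct (H1 t Ht1) as [A [B C]]. split; [auto | split; [auto | split; [auto | apply (H2 t Ht2)]]].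
Qed.

Lemma left_zero a b w m h lo : Hyp a b w -> (1 <= h)%nat ->
  lo = INR (h-1) / INR (m+1) * PI -> PI/2 < lo < theta_a a -> theta_a a < PI ->
  INR (h-1) * PI < INR (m+1) * theta_a a < INR h * PI ->
  exists t, lo < t < theta_a a /\ w t <> 0 /\ g w m t = 0.
Proof.
  intros H Hh Elo Hlo Hta1 Hy.
  assert (Hta : PI/2 < theta_a a < PI) by lra.
  destruct (near_ta a b w m h H Hh Hta Hy) as [d [Hd Hn]].
  set (s := (-1)^h) in *.
  assert (Hs : Rabs s = 1) by apply pow_1_abs.
  assert (Hss : s * s = 1) by apply s_sq.
  assert (Hsm : (-1)^(h-1) = - s).
  { unfold s. destruct h; [lia|]. simpl. replace (h-0)%nat with h by lia. ring. }
  set (e := Rmin d (theta_a a - lo)).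
  assert (He : 0 < e) by (apply Rmin_pos; lra).
  assert (He1 : e <= d) by apply Rmin_l.
  assert (He2 : e <= theta_a a - lo) by apply Rmin_r.
  set (t1 := theta_a a - e/2).
  assert (Ht1 : Rabs (t1 - theta_a a) < d) by (unfold t1; rewrite Rabs_left; lra).
  destruct (Hn t1 Ht1) as [HD1 [Hw1 [_ Hp1]]].
  specialize (Hw1 ltac:(unfold t1; lra)).
  assert (G1 : s * g w m t1 < 0).
  { rewrite g_psi; [| lra | pose proof (sin_D t1 HD1); lra].
    replace (s * (psi w m t1 / w t1)) with ((s * psi w m t1) * / w t1) by (field; lra).
    apply Rmult_neg_pos; auto. apply Rinv_0_lt_compat; lra. }
  assert (HlD : PI/2 < lo < PI) by lra.
  assert (G0 : s * g w m lo > 0).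
  { rewrite (g_end w m lo (h-1) Elo), Hsm.
    destruct (w_spec a b w lo H HlD) as [Hwl _].
    pose proof (small_pow s (w lo) m Hs Hwl). rewrite Nat.add_1_r.
    apply Rabs_def2 in H0. nra. }
  destruct (Ranalysis5.IVT_interv (fun t => - (s * g w m t)) lo t1) as [z [Hz Ez]].
  { intros x Hx. apply cp_opp, cp_mult; [apply cp_const|].
    assert (HxD : PI/2 < x < PI) by (unfold t1 in Hx; lra).
    apply (g_cont a b); auto. intro Hw0. apply (w_zero_ta a b w x H HxD) in Hw0.
    unfold t1 in Hx. lra. }
  { unfold t1; lra. }
  { lra. }
  { lra. }
  assert (z <> lo) by (intro; subst z; lra).
  assert (z <> t1) by (intro; subst z; lra).
  exists z. split; [unfold t1 in *; lra|]. split.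
  - intro Hw0. apply (w_zero_ta a b w z H) in Hw0; [| unfold t1 in *; lra].
    unfold t1 in *; lra.
  - assert (s * g w m z = 0) by lra.
    apply Rmult_integral in H2. destruct H2; auto. rewrite H2 in Hss. lra.
Qed.

Lemma right_zero a b w m h hi : Hyp a b w -> (1 <= h)%nat ->
  hi = INR h / INR (m+1) * PI -> theta_a a < hi < PI -> PI/2 < theta_a a ->
  INR (h-1) * PI < INR (m+1) * theta_a a < INR h * PI ->
  exists t, theta_a a < t < hi /\ w t <> 0 /\ g w m t = 0.
Proof.
  intros H Hh Ehi Hhi Hta1 Hy.
  assert (Hta : PI/2 < theta_a a < PI) by lra.
  destruct (near_ta a b w m h H Hh Hta Hy) as [d [Hd Hn]].
  set (s := (-1)^h) in *.
  assert (Hs : Rabs s = 1) by apply pow_1_abs.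
  assert (Hss : s * s = 1) by apply s_sq.
  set (e := Rmin d (hi - theta_a a)).
  assert (He : 0 < e) by (apply Rmin_pos; lra).
  assert (He1 : e <= d) by apply Rmin_l.
  assert (He2 : e <= hi - theta_a a) by apply Rmin_r.
  set (t1 := theta_a a + e/2).
  assert (Ht1 : Rabs (t1 - theta_a a) < d) by (unfold t1; rewrite Rabs_right; lra).
  destruct (Hn t1 Ht1) as [HD1 [_ [Hw1 Hp1]]].
  specialize (Hw1 ltac:(unfold t1; lra)).
  assert (G1 : s * g w m t1 > 0).
  { rewrite g_psi; [| lra | pose proof (sin_D t1 HD1); lra].
    replace (s * (psi w m t1 / w t1)) with ((s * psi w m t1) * / w t1) by (field; lra).
    assert (/ w t1 < 0) by (apply Rinv_lt_0_compat; lra). nra. }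
  assert (HhD : PI/2 < hi < PI) by lra.
  assert (G0 : s * g w m hi < 0).
  { rewrite (g_end w m hi h Ehi). fold s.
    destruct (w_spec a b w hi H HhD) as [Hwl _].
    pose proof (small_pow s (w hi) m Hs Hwl). rewrite Nat.add_1_r.
    apply Rabs_def2 in H0. nra. }
  destruct (Ranalysis5.IVT_interv (fun t => - (s * g w m t)) t1 hi) as [z [Hz Ez]].
  { intros x Hx. apply cp_opp, cp_mult; [apply cp_const|].
    assert (HxD : PI/2 < x < PI) by (unfold t1 in Hx; lra).
    apply (g_cont a b); auto. intro Hw0. apply (w_zero_ta a b w x H HxD) in Hw0.
    unfold t1 in Hx. lra. }
  { unfold t1; lra. }
  { lra. }
  { lra. }
  assert (z <> hi) by (intro; subst z; lra).
  assert (z <> t1) by (intro; subst z; lra).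
  exists z. split; [unfold t1 in *; lra|]. split.
  - intro Hw0. apply (w_zero_ta a b w z H) in Hw0; [| unfold t1 in *; lra].
    unfold t1 in *; lra.
  - assert (s * g w m z = 0) by lra.
    apply Rmult_integral in H2. destruct H2; auto. rewrite H2 in Hss. lra.
Qed.

Lemma div_lt N x c : N > 0 -> x * PI < c * N -> x / N * PI < c.
Proof.
  intros HN H. replace (x / N * PI) with ((x * PI) * / N) by (field; lra).
  apply (Rmult_lt_reg_r N); auto. rewrite Rmult_assoc, Rinv_l; lra.
Qed.

Lemma div_gt N x c : N > 0 -> x * PI > c * N -> x / N * PI > c.
Proof.
  intros HN H. replace (x / N * PI) with ((x * PI) * / N) by (field; lra).
  apply (Rmult_lt_reg_r N); auto. rewrite Rmult_assoc, Rinv_l; lra.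
Qed.

Lemma mul_lt N x t : N > 0 -> t < x / N * PI -> N * t < x * PI.
Proof.
  intros HN H. apply (Rmult_lt_compat_l N) in H; auto.
  replace (N * (x / N * PI)) with (x * PI) in H by (field; lra). auto.
Qed.

Lemma mul_gt N x t : N > 0 -> t > x / N * PI -> N * t > x * PI.
Proof.
  intros HN H. apply (Rmult_lt_compat_l N) in H; auto.
  replace (N * (x / N * PI)) with (x * PI) in H by (field; lra). auto.
Qed.

Lemma div_le N x c : N > 0 -> x * PI <= c * N -> x / N * PI <= c.
Proof.
  intros HN H. replace (x / N * PI) with ((x * PI) * / N) by (field; lra).
  apply (Rmult_le_reg_r N); auto. rewrite Rmult_assoc, Rinv_l; lra.
Qed.

Lemma INR2 x : INR (2 * x) = 2 * INR x.
Proof. rewrite mult_INR. simpl. ring. Qed.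

Lemma arith_half N X : N > 0 -> 2 * X <= N -> X * PI <= PI/2 * N.
Proof. intros. pose proof PI_RGT_0. nra. Qed.
Lemma arith_half2 N X : N > 0 -> 2 * X > N -> X * PI > PI/2 * N.
Proof. intros. pose proof PI_RGT_0. nra. Qed.
Lemma arith_one N Y : N > 0 -> Y < N -> Y * PI < PI * N.
Proof. intros. pose proof PI_RGT_0. nra. Qed.

Theorem mainTheorem18 (a b : R) (w : R -> R) (m h : nat) :
  standing a b -> is_w a b w -> a > 1 / 4 -> (6 <= m)%nat ->
  (fl m + 1 <= h <= m + 1)%nat ->
  inJ m h (theta_a a) ->
  ((fl m + 2 <= h <= m)%nat ->
     exists t1 t2, t1 <> t2 /\ zero_in a w m h t1 /\ zero_in a w m h t2) /\
  ((h = m + 1 \/ h = fl m + 1)%nat -> exists t, zero_in a w m h t).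
Proof.
  intros Hs Hw Ha Hm Hh HJ.
  assert (H : Hyp a b w) by (split; [|split]; auto).
  assert (Hfl : (2 * fl m <= m + 1 <= 2 * fl m + 1)%nat).
  { unfold fl. pose proof (Nat.div_mod_eq (m+1) 2). pose proof (Nat.mod_upper_bound (m+1) 2).
    lia. }
  pose proof PI_RGT_0 as HPI.
  assert (Hh1 : (1 <= h)%nat) by lia.
  assert (HN : INR (m+1) > 0) by (apply lt_0_INR; lia).
  assert (FA : h = (fl m + 1)%nat -> 2 * INR (h-1) <= INR (m+1)).
  { intros. rewrite <- INR2. apply le_INR. lia. }
  assert (FB : h <> (fl m + 1)%nat -> 2 * INR (h-1) > INR (m+1)).
  { intros. rewrite <- INR2. apply lt_INR. lia. }
  assert (FC : (h <= m)%nat -> INR h < INR (m+1)).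
  { intros. apply lt_INR. lia. }
  assert (Hhi : INR h / INR (m+1) * PI <= PI).
  { destruct (Nat.eq_dec h (m+1)) as [->|]. { right. field. lra. }
    left. apply div_lt; auto. apply arith_one; auto. apply FC. lia. }
  unfold inJ, Jlo, Jhi in HJ. destruct HJ as [HJ1 HJ2].
  assert (Hta_lo : theta_a a > INR (h-1) / INR (m+1) * PI /\ theta_a a > PI/2).
  { destruct (Nat.eqb_spec h (fl m + 1)) as [E|E].
    - split; [|lra]. apply Rle_lt_trans with (PI/2); auto.
      apply div_le; auto. apply arith_half; auto.
    - split; [lra|]. apply Rlt_trans with (INR (h - 1) / INR (m+1) * PI); auto.
      apply div_gt; auto. apply arith_half2; auto. }
  destruct Hta_lo as [Hta_lo1 Hta_lo2].
  assert (Hy : INR (h-1) * PI < INR (m+1) * theta_a a < INR h * PI).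
  { split; [apply mul_gt | apply mul_lt]; auto. }
  split.
  - intros Hmid.
    assert (Hne : h <> (fl m + 1)%nat) by lia.
    assert (Heqb : Nat.eqb h (fl m + 1) = false) by (apply Nat.eqb_neq; auto).
    rewrite Heqb in HJ1.
    assert (Hlo : INR (h-1) / INR (m+1) * PI > PI/2).
    { apply div_gt; auto. apply arith_half2; auto. }
    assert (Hhi2 : INR h / INR (m+1) * PI < PI).
    { apply div_lt; auto. apply arith_one; auto. apply FC. lia. }
    destruct (left_zero a b w m h (INR (h-1) / INR (m+1) * PI) H Hh1 eq_refl
      ltac:(lra) ltac:(lra) Hy) as [t1 [Ht1 [Hw1 Hg1]]].
    destruct (right_zero a b w m h (INR h / INR (m+1) * PI) H Hh1 eq_refl
      ltac:(lra) ltac:(lra) Hy) as [t2 [Ht2 [Hw2 Hg2]]].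
    exists t1, t2. split; [lra|].
    unfold zero_in, inJ, Jlo, Jhi. rewrite Heqb.
    split; (split; [lra| split; [lra | split; auto]]).
  - intros [E|E].
    + assert (Hne : h <> (fl m + 1)%nat) by lia.
      assert (Heqb : Nat.eqb h (fl m + 1) = false) by (apply Nat.eqb_neq; auto).
      rewrite Heqb in HJ1.
      assert (Hlo : INR (h-1) / INR (m+1) * PI > PI/2).
      { apply div_gt; auto. apply arith_half2; auto. }
      destruct (left_zero a b w m h (INR (h-1) / INR (m+1) * PI) H Hh1 eq_refl
        ltac:(lra) ltac:(lra) Hy) as [t1 [Ht1 [Hw1 Hg1]]].
      exists t1. unfold zero_in, inJ, Jlo, Jhi. rewrite Heqb.
      split; [lra| split; [lra | split; auto]].
    + assert (Heqb : Nat.eqb h (fl m + 1) = true) by (apply Nat.eqb_eq; auto).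
      assert (Hhi2 : INR h / INR (m+1) * PI < PI).
      { apply div_lt; auto. apply arith_one; auto. apply FC. lia. }
      destruct (right_zero a b w m h (INR h / INR (m+1) * PI) H Hh1 eq_refl
        ltac:(lra) ltac:(lra) Hy) as [t2 [Ht2 [Hw2 Hg2]]].
      exists t2. unfold zero_in, inJ, Jlo, Jhi. rewrite Heqb.
      split; [lra| split; [lra | split; auto]].
Qed.
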